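(* Let $\boldsymbol\lambda$ be a partition with at most $N$ parts and let $F_{ij}\in\mathcal O_{\boldsymbol\lambda}$ be as defined in the context. Then the elements $F_{ij}$, $i=1,\dots,N$, $j=i+1,i+2,\dots$, generate the algebra $\mathcal O_{\boldsymbol\lambda}$.
   Context: A partition with at most $N$ parts is a sequence of integers $\lambda_1\ge\dots\ge\lambda_N\ge0$. Put $d_i=\lambda_i+N-i$ and $P=\{d_1,\dots,d_N\}$. Let $\mathcal O_{\boldsymbol\lambda}=\mathbb C[f_{ij}:1\le i\le N,\ 1\le j\le d_i,\ d_i-j\notin P]$ be the polynomial algebra in the indicated variables, and $f_i(u)=u^{d_i}+\sum_{1\le j\le d_i,\ d_i-j\notin P}f_{ij}u^{d_i-j}$. Let $\operatorname{Wr}(g_1,\dots,g_N)=\det(g_i^{(j-1)})_{i,j=1}^N$. For a square matrix with possibly noncommuting entries, $\operatorname{rdet}A=\sum_\sigma\operatorname{sgn}(\sigma)a_{1\sigma(1)}a_{2\sigma(2)}\cdots$. With $\partial=d/du$, define $\mathcal D^{\mathcal O}_{\boldsymbol\lambda}=\frac1{\operatorname{Wr}(f_1,\dots,f_N)}\operatorname{rdet}\begin{pmatrix}f_1&f_1'&\dots&f_1^{(N)}\\ \vdots&&&\vdots\\ f_N&f_N'&\dots&f_N^{(N)}\\ 1&\partial&\dots&\partial^N\end{pmatrix}=\partial^N+\sum_{i=1}^NF_i(u)\partial^{N-i}$; the top coefficient of the Wronskian is a nonzero constant, so $F_i(u)=\sum_{j\ge1}F_{ij}u^{-j}$ with $F_{ij}\in\mathcal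 O_{\boldsymbol\lambda}$. *)

(* Defs.v *)
From mathcomp Require Import all_boot all_fingroup all_algebra.
From mathcomp Require Import Rstruct complex.
From mathcomp Require Import mpoly.
Set Implicit Arguments. Unset Strict Implicit. Unset Printing Implicit Defensive.
Import GRing.Theory.
Local Open Scope ring_scope.

Definition Cplx : numClosedFieldType := (Rdefinitions.R)[i].

Section Setup.
Variables (N : nat) (lam : 'I_N -> nat).

(* A partition with at most N parts: lam_1 >= ... >= lam_N >= 0.
   Indices are 0-based: the paper's index i corresponds to i.+1 here. *)
Definition is_partition : Prop := forall i j : 'I_N, (i <= j)%N -> (lam j <= lam i)%N.

(* d_i = lam_i + N - i  (paper, 1-based) = lam_i + (N - 1 - i) (0-based) *)
Definition dd (i : 'I_N) : nat := (lam i + (N - i.+1))%N.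

Definition inP (m : nat) : bool := [exists i : 'I_N, dd i == m].

Definition valid_idx (x : {i : 'I_N & 'I_(dd i).+1}) : bool :=
  (0 < (tagged x : nat))%N && ~~ inP (dd (tag x) - tagged x).

Definition Idx := {x : {i : 'I_N & 'I_(dd i).+1} | valid_idx x}.

(* O_lambda : polynomial algebra over C in the variables f_{ij}, (i,j) in Idx *)
Definition Olam := {mpoly Cplx[#|{: Idx}|]}.

Definition fvar (x : Idx) : Olam := 'X_(enum_rank x).

Definition fpoly (i : 'I_N) : {poly Olam} :=
  'X^(dd i) + \sum_(x : Idx | tag (val x) == i)
                 (fvar x)%:P * 'X^(dd i - tagged (val x)).

Definition Wr : {poly Olam} := \det (\matrix_(i < N, j < N) (fpoly i)^`(j)).

(* The (N+1)x(N+1) matrix whose first N rows are (f_i, f_i', ..., f_i^{(N)})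
   and whose last row is (1, d, ..., d^N).  Since only the last row has
   noncommuting entries (which sit rightmost in each rdet monomial),
   rdet = sum_k coefD k * d^k, where coefD k is the sum over permutations
   s with s(last) = k of sgn(s) prod_{r < N} f_r^{(s r)}.                   *)
Definition coefD (k : 'I_N.+1) : {poly Olam} :=
  \sum_(s : 'S_N.+1 | s ord_max == k)
     (-1) ^+ s * \prod_(r < N) (fpoly r)^`(s (widen_ord (leqnSn N) r)).

(* Thus D = d^N + sum_i F_i(u) d^{N-i}, with F_i(u) = coefD (N - i) / Wr
   (note coefD N = Wr).  For 1 <= i <= N: *)
Definition numF (i : nat) : {poly Olam} := coefD (inord (N - i)).

End Setup.

(* g : nat -> R (g 0 unused) is the sequence of coefficients of the
   expansion  c(u) / W(u) = sum_{j >= 1} g_j u^{-j}  at u = infinity, i.e.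
   W(u) * (sum_{j>=1} g_j u^{-j}) = c(u) as formal Laurent series in u^{-1}:
   - coefficient of u^n, n >= 0 :  sum_{j >= 1} W_{n+j} g_j = c_n
   - coefficient of u^{-n}, n >= 1 : sum_{k >= 0} W_k g_{k+n} = 0          *)
Definition laurent_expansion (R : comNzRingType) (c W : {poly R}) (g : nat -> R) : Prop :=
  (forall n : nat, \sum_(1 <= j < (size W).+1) W`_(n + j) * g j = c`_n) /\
  (forall n : nat, (0 < n)%N -> \sum_(k < size W) W`_k * g (k + n)%N = 0).

Inductive in_gen_subalg (n : nat) (S : {mpoly Cplx[n]} -> Prop)
  : {mpoly Cplx[n]} -> Prop :=
| gen_const (c : Cplx) : in_gen_subalg S c%:MP
| gen_elem (p : {mpoly Cplx[n]}) : S p -> in_gen_subalg S p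
| gen_add (p q : {mpoly Cplx[n]}) :
    in_gen_subalg S p -> in_gen_subalg S q -> in_gen_subalg S (p + q)
| gen_mul (p q : {mpoly Cplx[n]}) :
    in_gen_subalg S p -> in_gen_subalg S q -> in_gen_subalg S (p * q).

(* Main.v *)
Require Import Defs.
From mathcomp Require Import all_boot all_fingroup all_algebra.
From mathcomp Require Import Rstruct complex.
From mathcomp Require Import mpoly.
From mathcomp Require Import zify.
Set Implicit Arguments. Unset Strict Implicit. Unset Printing Implicit Defensive.
Import GRing.Theory.
Local Open Scope ring_scope.
Section Gen.
Variable R : idomainType.
Implicit Types p q W c : {poly R}.

Lemma size_sum_leq (I : Type) (r : seq I) (P : pred I) (G : I -> {poly R}) n :
  (forall i, P i -> (size (G i) <= n)%N) -> (size (\sum_(i <- r | P i) G i)%R <= n)%N.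
Proof.
move=> H; apply/leq_sizeP => e He; rewrite coef_sum big1 // => i Pi.
by apply: (leq_sizeP _ _ (H i Pi)).
Qed.

Lemma coefM_top p q a b : (size p <= a.+1)%N -> (size q <= b.+1)%N ->
  (p * q)`_(a + b) = p`_a * q`_b.
Proof.
move=> Hp Hq; have Ha : (a < (a + b).+1)%N by lia.
rewrite coefM (bigD1 (Ordinal Ha)) //=.
have -> : (a + b - a = b)%N by lia.
rewrite big1 ?addr0 // => i /eqP Hi.
have [ltia|ltai] := ltnP i a.
  by rewrite [q`__](leq_sizeP _ _ Hq) ?mulr0 //; lia.
rewrite [p`__](leq_sizeP _ _ Hp) ?mul0r //.
have : (nat_of_ord i) <> a by move=> E; apply: Hi; apply: val_inj.
lia.
Qed.

Lemma size_mul_bound p q a b : (size p <= a.+1)%N -> (size q <= b.+1)%N ->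
  (size (p * q)%R <= (a + b).+1)%N.
Proof.
move=> Hp Hq; apply: leq_trans (size_polyMleq p q) _; lia.
Qed.

Lemma prod_top n (G : 'I_n -> {poly R}) (e : 'I_n -> nat) :
  (forall r, (size (G r) <= (e r).+1)%N) ->
  (size (\prod_(r < n) G r)%R <= (\sum_(r < n) e r).+1)%N /\
  (\prod_(r < n) G r)`_(\sum_(r < n) e r) = \prod_(r < n) (G r)`_(e r).
Proof.
elim: n G e => [|n IH] G e H.
  by rewrite !big_ord0 size_poly1 coef1.
rewrite !big_ord_recr /=.
have [H1 H2] := IH (fun r => G (widen_ord (leqnSn n) r)) (fun r => e (widen_ord (leqnSn n) r)) (fun r => H _).
split; first exact: size_mul_bound.
by rewrite coefM_top // H2.
Qed.

Lemma cancel_size W p K : W != 0 -> (size (W * p)%R <= (size W).-1 + K)%N -> (size p <= K)%N.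
Proof.
move=> W0; have [->|p0] := eqVneq p 0; first by rewrite size_poly0.
rewrite size_mul // => H.
have : (0 < size W)%N by rewrite size_poly_gt0.
lia.
Qed.

Lemma sum_trunc (G : nat -> R) n0 m : (n0 <= m)%N -> (forall i, (n0 <= i)%N -> (i < m)%N -> G i = 0) ->
  \sum_(i < m) G i = \sum_(i < n0) G i.
Proof.
move=> Hn H; rewrite -!(big_mkord xpredT) (big_cat_nat (leq0n n0) Hn) /=.
rewrite [X in _ + X]big_nat_cond [X in _ + X]big1 ?addr0 // => i /andP[/andP[H1 H2] _]; exact: H.
Qed.

Lemma Q_lemma c W (g : nat -> R) M : laurent_expansion c W g -> (size W <= M)%N ->
  (size (W * \poly_(b < M) g (M - b)%N - 'X^M * c)%R <= (size W).-1)%N.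
Proof.
move=> [H1 H2] HM; apply/leq_sizeP => e He.
rewrite coefB coefXnM coefM.
have HW : forall i, (size W <= i)%N -> W`_i = 0 by move=> i; apply: nth_default.
case: (ltnP e M) => HeM.
  rewrite subr0.
  rewrite -[RHS](H2 (M - e)%N); last by lia.
  etransitivity.
    apply: (@sum_trunc (fun a => W`_a * (\poly_(b < M) g (M - b)%N)`_(e - a)) (size W) e.+1).
      by lia.
    by move=> i Hi _; rewrite HW ?mul0r.
  apply: eq_bigr => i _; rewrite coef_poly.
  have -> : (e - i < M)%N by lia.
  have Hi := ltn_ord i; congr (_ * g _); move: Hi; move: (nat_of_ord i) => k Hk; lia.
apply/eqP; rewrite subr_eq0; apply/eqP; etransitivity; last exact: (H1 (e-M)%N).
rewrite -(big_mkord xpredT (fun j => W`_j * (\poly_(b < M) g (M - b)%N)`_(e - j))).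
rewrite (@big_cat_nat _ _ _ (e - M).+1 0 e.+1) /=; [|by []|by lia].
rewrite big_nat_cond big1 ?add0r; last first.
  move=> i /andP[/andP[_ Hi] _]; rewrite coef_poly.
  by rewrite ifF ?mulr0 //; lia.
rewrite (big_addn 0 e.+1 (e - M).+1).
have -> : (e.+1 - (e - M).+1)%N = M by lia.
rewrite (big_addn 0 (size W).+1 1).
have -> : ((size W).+1 - 1)%N = size W by lia.
rewrite [in RHS]big_mkord [in LHS]big_mkord.
etransitivity.
  apply: (@sum_trunc (fun i => W`_(i + (e - M).+1) * (\poly_(b < M) g (M - b)%N)`_(e - (i + (e - M).+1))) (size W) M HM).
  by move=> i Hi _; rewrite HW ?mul0r //; lia.
apply: eq_bigr => i _; rewrite coef_poly.
have Hi := ltn_ord i; move: Hi; move: (nat_of_ord i) => k Hk.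
rewrite ifT; last by lia.
congr (W`__ * g _); lia.
Qed.

End Gen.
Definition ffpoly (R : nzRingType) (r : nat) : {poly R} := \prod_(k < r) ('X - (k%:R)%:P).

Lemma size_ffpoly (R : nzRingType) r : size (ffpoly R r) = r.+1.
Proof. by rewrite /ffpoly -big_filter size_prod_XsubC size_filter count_predT [index_enum _]unlock -enumT size_enum_ord. Qed.

Lemma monic_ffpoly (R : nzRingType) r : ffpoly R r \is monic.
Proof. by rewrite /ffpoly -big_filter monic_prod_XsubC. Qed.

Lemma ffpoly_eval (R : comNzRingType) x r : (ffpoly R r).[x%:R] = (x ^_ r)%:R.
Proof.
rewrite /ffpoly horner_prod ffact_prod natr_prod.
case: (leqP r x) => Hr.
  apply: eq_bigr => k _; rewrite hornerXsubC natrB //; have := ltn_ord k; lia.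
rewrite (bigD1 (Ordinal Hr)) //= hornerXsubC subrr mul0r.
by rewrite (bigD1 (Ordinal Hr)) //= subnn mul0r.
Qed.

Lemma roots_prod (R : idomainType) (p : {poly R}) (rs : seq R) :
  all (root p) rs -> uniq rs -> exists q, p = q * \prod_(z <- rs) ('X - z%:P).
Proof.
elim: rs => [|z rs IH] /=; first by move=> _ _; exists p; rewrite big_nil mulr1.
case/andP => rz rrs /andP[zrs urs].
have [q Hq] := IH rrs urs.
have : root q z.
  move: rz; rewrite /root Hq hornerM horner_prod mulf_eq0 => /orP[//|].
  move=> /eqP H0; exfalso; move: H0; apply/eqP; rewrite prodf_seq_neq0; apply/allP => y yrs /=.
  rewrite hornerXsubC subr_eq0; apply/eqP => E; move: zrs; rewrite E yrs //.
case/factor_theorem => q' Hq'.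
by exists q'; rewrite Hq Hq' big_cons mulrA.
Qed.

Lemma monic_roots (R : idomainType) (p : {poly R}) (rs : seq R) :
  p \is monic -> size p = (size rs).+1 -> all (root p) rs -> uniq rs ->
  p = \prod_(z <- rs) ('X - z%:P).
Proof.
move=> mp sp rp urs; have [q Hq] := roots_prod rp urs.
have Hs : size (\prod_(z <- rs) ('X - z%:P)) = (size rs).+1 by apply: size_prod_XsubC.
have Hm : \prod_(z <- rs) ('X - z%:P) \is monic by apply: monic_prod_XsubC.
move: Hq Hs Hm; set P := \prod_(z <- rs) _ => Hq Hs Hm.
have p0 : p != 0 by rewrite monic_neq0.
have q0 : q != 0 by apply: contraNneq p0 => q0; rewrite Hq q0 mul0r.
have sq : size q = 1%N.
  move: sp; rewrite Hq size_Mmonic // Hs.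
  have : (0 < size q)%N by rewrite size_poly_gt0.
  move=> A B; move: A B; move: (size q) => k; lia.
have [c Hc] : exists c, q = c%:P by exists q`_0; apply: size1_polyC; rewrite sq.
have : lead_coef p = 1 by apply/eqP.
rewrite Hq lead_coefM Hc lead_coefC (eqP Hm) mulr1 => c1.
by rewrite c1 mul1r.
Qed.
Lemma IndP_eval_gen (R0 : comNzRingType) (N : nat) (G : nat -> R0) m :
  (ffpoly R0 N + \sum_(1 <= i < N.+1) (G i)%:P * ffpoly R0 (N - i)).[m%:R] =
  (m ^_ N)%:R + \sum_(1 <= i < N.+1) (m ^_ (N - i))%:R * G i.
Proof.
rewrite hornerD horner_sum ffpoly_eval; congr (_ + _).
by apply: eq_bigr => i _; rewrite hornerCM ffpoly_eval mulrC.
Qed.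

Lemma IndP_prod_gen (R0 : idomainType) (N : nat) (G : nat -> R0) (rs : seq R0) :
  size rs = N ->
  all (root (ffpoly R0 N + \sum_(1 <= i < N.+1) (G i)%:P * ffpoly R0 (N - i))) rs ->
  uniq rs ->
  ffpoly R0 N + \sum_(1 <= i < N.+1) (G i)%:P * ffpoly R0 (N - i) = \prod_(z <- rs) ('X - z%:P).
Proof.
move=> Hs Hr Hu.
have Hrest : (size (\sum_(1 <= i < N.+1) (G i)%:P * ffpoly R0 (N - i))%R <= N)%N.
  rewrite big_nat_cond; apply: size_sum_leq => i /andP[/andP[H1 H2] _].
  apply: leq_trans (size_polyMleq _ _) _; rewrite size_ffpoly.
  have := size_polyC_leq1 (G i); lia.
have Hlt : (size (\sum_(1 <= i < N.+1) (G i)%:P * ffpoly R0 (N - i))%R < size (ffpoly R0 N))%N.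
  by rewrite size_ffpoly.
apply: monic_roots => //.
- by rewrite monicE lead_coefDl // -monicE monic_ffpoly.
- by rewrite size_polyDl // size_ffpoly Hs.
Qed.

Lemma prod_eval_gen (R0 : comNzRingType) (I : Type) (s : seq I) (g : I -> R0) x :
  (\prod_(z <- [seq g t | t <- s]) ('X - z%:P)).[x] = \prod_(t <- s) (x - g t).
Proof. by rewrite horner_prod big_map; apply: eq_bigr => t _; rewrite hornerXsubC. Qed.
Section Main.
Variables (N : nat) (lam : 'I_N -> nat).
Local Notation R := (Olam lam).
Local Notation f := (fpoly lam).
Local Notation d := (dd lam).

Definition Mv (v : 'I_N.+1 -> {poly R}) : 'M[{poly R}]_N.+1 :=
  \matrix_(i, j) (match unlift ord_max i with Some r => (f r)^`(j) | None => v j end).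

Lemma widen_lift (r : 'I_N) : widen_ord (leqnSn N) r = lift ord_max r.
Proof. by apply: val_inj; rewrite [RHS]lift_max. Qed.

Lemma unlift_widen (r : 'I_N) : unlift ord_max (widen_ord (leqnSn N) r) = Some r.
Proof. by rewrite widen_lift liftK. Qed.

Lemma det_Mv v : \det (Mv v) = \sum_(k < N.+1) Defs.coefD lam k * v k.
Proof.
rewrite /determinant (partition_big (fun s : 'S_N.+1 => s ord_max) xpredT) //=.
apply: eq_bigr => k _; rewrite /Defs.coefD big_distrl /=.
apply: eq_big => [s|s /eqP Hs] //.
rewrite big_ord_recr /= mxE unlift_none Hs mulrA; congr (_ * _ * _).
by apply: eq_bigr => r _; rewrite mxE unlift_widen.
Qed.

Lemma coefD_rel t : \sum_(k < N.+1) Defs.coefD lam k * (f t)^`(k) = 0.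
Proof.
rewrite -det_Mv; apply: (@determinant_alternate _ _ _ (widen_ord (leqnSn N) t) ord_max).
  by rewrite widen_lift eq_sym neq_lift.
by move=> j; rewrite !mxE unlift_widen unlift_none.
Qed.

Lemma coefD_max : Defs.coefD lam ord_max = Wr lam.
Proof.
have := det_Mv (fun j => (j == ord_max)%:R).
rewrite (bigD1 ord_max) //= eqxx mulr1 big1 ?addr0; last first.
  by move=> k /negPf ->; rewrite mulr0.
move=> <-; rewrite (expand_det_row _ ord_max) (bigD1 ord_max) //= big1 ?addr0; last first.
  by move=> k /negPf Hk; rewrite mxE unlift_none Hk mul0r.
rewrite mxE unlift_none eqxx mul1r /cofactor addnn -signr_odd odd_double expr0 mul1r.
congr (\det _); apply/matrixP => i j; rewrite !mxE liftK.
by rewrite lift_max.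
Qed.

Lemma main_rel t : Wr lam * (f t)^`(N) + \sum_(1 <= i < N.+1) numF lam i * (f t)^`(N - i) = 0.
Proof.
rewrite -[RHS](coefD_rel t) big_ord_recr /= coefD_max addrC; congr (_ + _).
transitivity (\sum_(k < N) Defs.coefD lam (inord k) * (f t)^`(k)); last first.
  apply: eq_bigr => k _; congr (Defs.coefD lam _ * _).
  apply: val_inj; rewrite /= inordK //; exact: ltnW (ltn_ord k).
rewrite -(big_mkord xpredT (fun k => Defs.coefD lam (inord k) * (f t)^`(k))).
rewrite big_nat_rev (big_add1 _ _ 0 N.+1) /=.
apply: eq_big_nat => i /andP[_ Hi].
have -> : (1 + N.+1 - i.+2 = N - i)%N by lia.
by rewrite /numF; have -> : (N - (N - i) = i)%N by lia.
Qed.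
Lemma coef_fpoly r e : (f r)`_e = (e == d r)%:R +
  \sum_(x : Idx lam | tag (val x) == r) fvar x * (e == (d r - tagged (val x))%N)%:R.
Proof.
rewrite /fpoly coefD coefXn coef_sum; congr (_ + _).
by apply: eq_bigr => x _; rewrite coefCM coefXn.
Qed.

Lemma fpoly_top r : (f r)`_(d r) = 1.
Proof.
rewrite coef_fpoly eqxx big1 ?addr0 // => x.
case: x => [[t j] Hv] /= /eqP Ht; subst t; have /andP[Hj _] := Hv.
have Hjd := ltn_ord j.
rewrite (_ : (_ == _) = false) ?mulr0 //; apply/negbTE; apply/eqP; move: Hj Hjd; move: (nat_of_ord j) => k; lia.
Qed.

Lemma size_fpoly r : (size (f r) <= (d r).+1)%N.
Proof.
apply/leq_sizeP => e He; rewrite coef_fpoly (_ : (e == d r) = false) ?add0r; last by apply/negbTE; apply/eqP; lia.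
rewrite big1 // => x _.
by rewrite (_ : (_ == _) = false) ?mulr0 //; apply/negbTE; apply/eqP; lia.
Qed.

Lemma size_derivn_f r m : (size ((f r)^`(m)) <= (d r - m).+1)%N.
Proof.
apply/leq_sizeP => e He; rewrite coef_derivn.
by rewrite (leq_sizeP _ _ (size_fpoly r)) ?mul0rn //; lia.
Qed.

Lemma top_derivn_f r m : ((f r)^`(m))`_(d r - m) = ((d r) ^_ m)%:R.
Proof.
rewrite coef_derivn; case: (leqP m (d r)) => Hm.
  by rewrite subnKC // fpoly_top.
have -> : (m + (d r - m) = m)%N by lia.
by rewrite (leq_sizeP _ _ (size_fpoly r)) // mul0rn ffact_small.
Qed.

Lemma derivn_f_small r m : (d r < m)%N -> (f r)^`(m) = 0.
Proof. by move=> H; apply: derivn_poly0; apply: leq_trans (size_fpoly r) _. Qed.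
Lemma sum_perm n (s : 'S_n) : (\sum_(i < n) (s i : nat) = 'C(n, 2))%N.
Proof.
rewrite -bin2_sum big_mkord.
by rewrite [in RHS](reindex_inj (@perm_inj _ s)).
Qed.

Definition Sd := (\sum_(r < N) d r)%N.
Definition Wdeg := (Sd - 'C(N, 2))%N.

Lemma size_coefD k : (size (Defs.coefD lam k) <= (Sd + k).+1 - 'C(N.+1, 2))%N.
Proof.
rewrite /Defs.coefD; apply: size_sum_leq => s /eqP Hs; rewrite size_Msign.
case: (boolP [exists r, (d r < s (widen_ord (leqnSn N) r))%N]) => [/existsP[r Hr]|/existsPn Hall].
  by rewrite (bigD1 r) //= derivn_f_small // mul0r size_poly0.
have Hle : forall r, (s (widen_ord (leqnSn N) r) <= d r)%N by move=> r; rewrite leqNgt Hall.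
have [H1 _] := prod_top (fun r => (size_derivn_f r (s (widen_ord (leqnSn N) r)))).
apply: leq_trans H1 _.
have E1 : (\sum_(r < N) (d r - s (widen_ord (leqnSn N) r)) + \sum_(r < N) s (widen_ord (leqnSn N) r) = Sd)%N.
  by rewrite /Sd -big_split /=; apply: eq_bigr => r _; rewrite subnK.
have E2 : (\sum_(r < N) s (widen_ord (leqnSn N) r) + k = 'C(N.+1, 2))%N.
  by rewrite -(sum_perm s) big_ord_recr /= Hs.
lia.
Qed.

Lemma Wr_top : (Wr lam)`_Wdeg = \det (\matrix_(i < N, j < N) ((d i) ^_ j)%:R : 'M[R]_N).
Proof.
rewrite /Wr /determinant coef_sum; apply: eq_bigr => s _.
have key : (\prod_i (\matrix_(i < N, j < N) (f i)^`(j)) i (s i))`_Wdeg =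
           \prod_i (\matrix_(i < N, j < N) ((d i) ^_ j)%:R : 'M[R]_N) i (s i).
  case: (boolP [exists r, (d r < s r)%N]) => [/existsP[r Hr]|/existsPn Hall].
    rewrite (bigD1 r) //= mxE derivn_f_small // mul0r coef0.
    by rewrite (bigD1 r) //= mxE ffact_small // mul0r.
  under eq_bigr do rewrite mxE.
  under [RHS]eq_bigr do rewrite mxE.
  have Hle : forall r, (s r <= d r)%N by move=> r; rewrite leqNgt Hall.
  have [_ H2] := prod_top (fun r => size_derivn_f r (s r)).
  have E : (\sum_(r < N) (d r - s r))%N = Wdeg.
    have E1 : (\sum_(r < N) (d r - s r) + \sum_(r < N) s r = Sd)%N.
      by rewrite /Sd -big_split /=; apply: eq_bigr => r _; rewrite subnK.
    rewrite /Wdeg -(sum_perm s); lia.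
  by rewrite -E H2; apply: eq_bigr => r _; exact: top_derivn_f.
by case: (perm.odd_perm s); rewrite /= ?expr1 ?expr0 ?mulN1r ?mul1r ?coefN key.
Qed.
Lemma d_inj : is_partition lam -> injective d.
Proof.
move=> Hp i j E; apply: val_inj; apply/eqP; move: E; rewrite /dd.
have Hi := ltn_ord i; have Hj := ltn_ord j.
case: (ltngtP i j) => [Hij|Hij|//] E.
  have := Hp i j (ltnW Hij); move: E Hi Hj Hij; move: (lam i) (lam j) (nat_of_ord i) (nat_of_ord j) => a b x y; lia.
have := Hp j i (ltnW Hij); move: E Hi Hj Hij; move: (lam i) (lam j) (nat_of_ord i) (nat_of_ord j) => a b x y; lia.
Qed.

Lemma natr_neq (a b : nat) : a != b -> (a%:R : R) != b%:R.
Proof.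
apply: contra => /eqP H; have := congr1 (mcoeff 0) H.
by rewrite -!mpolyC_nat !mcoeffC eqxx !mulr1 => /eqP; rewrite Num.Theory.eqr_nat.
Qed.

Lemma det_ff_neq0 : injective d -> \det (\matrix_(i < N, j < N) ((d i) ^_ j)%:R : 'M[R]_N) != 0.
Proof.
move=> Hinj.
pose a : 'rV[R]_N := \row_j ((d j)%:R).
pose U : 'M[R]_N := \matrix_(k < N, j < N) (ffpoly R j)`_k.
have -> : \matrix_(i < N, j < N) ((d i) ^_ j)%:R = (Vandermonde N a)^T *m U.
  apply/matrixP => i j; rewrite !mxE -ffpoly_eval (@horner_coef_wide _ N); last first.
    by rewrite size_ffpoly.
  by apply: eq_bigr => k _; rewrite !mxE mulrC.
rewrite det_mulmx det_tr det_Vandermonde -det_tr det_trig; last first.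
  apply/is_trig_mxP => i j Hij; rewrite !mxE; apply: nth_default.
  by rewrite size_ffpoly.
have -> : \prod_(i < N) U^T i i = 1.
  rewrite big1 // => i _; rewrite !mxE.
  have := monic_ffpoly R i; rewrite monicE /lead_coef size_ffpoly => /eqP //.
rewrite mulr1.
apply: (big_ind (fun x : R => x != 0)); [exact: oner_neq0|by move=> x y; apply: mulf_neq0|].
move=> i _; apply: (big_ind (fun x : R => x != 0)); [exact: oner_neq0|by move=> x y; apply: mulf_neq0|].
move=> j Hij; rewrite !mxE subr_eq0; apply: natr_neq; apply/eqP => E.
by have := Hinj _ _ E => Eji; move: Hij; rewrite Eji ltnn.
Qed.

Lemma Wr_size : injective d -> size (Wr lam) = Wdeg.+1 /\ ('C(N, 2) <= Sd)%N.
Proof.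
move=> Hinj.
have Htop : (Wr lam)`_Wdeg != 0 by rewrite Wr_top det_ff_neq0.
have Hs := size_coefD ord_max; rewrite coefD_max in Hs.
have Hge : (Wdeg < size (Wr lam))%N.
  by rewrite ltnNge; apply: contra Htop => H; rewrite nth_default.
have := binS N 1; rewrite bin1 => HC.
move: Hs Hge; rewrite /Wdeg /=; lia.
Qed.

Lemma size_numF i : ('C(N, 2) <= Sd)%N -> (1 <= i <= N)%N ->
  (size (numF lam i) <= Wdeg.+1 - i)%N.
Proof.
move=> HS /andP[H1 H2]; rewrite /numF.
apply: leq_trans (size_coefD _) _; rewrite inordK; last by lia.
have := binS N 1; rewrite bin1 => HC.
rewrite /Wdeg; lia.
Qed.
Variables (Hlam : is_partition lam) (F : nat -> nat -> R)
  (HF : forall i : nat, (1 <= i <= N)%N -> laurent_expansion (numF lam i) (Wr lam) (F i)).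

Definition Sg := fun q : R => exists i j : nat, [/\ (1 <= i <= N)%N, (i < j)%N & q = F i j].
Local Notation S := (in_gen_subalg Sg).

Lemma S_C c : S c%:MP. Proof. exact: gen_const. Qed.
Lemma S_nat n : S n%:R. Proof. rewrite -mpolyC_nat; exact: S_C. Qed.
Lemma S_0 : S 0. Proof. by rewrite -mpolyC0; exact: S_C. Qed.
Lemma S_1 : S 1. Proof. by rewrite -mpolyC1; exact: S_C. Qed.
Lemma S_add x y : S x -> S y -> S (x + y). Proof. exact: gen_add. Qed.
Lemma S_mul x y : S x -> S y -> S (x * y). Proof. exact: gen_mul. Qed.
Lemma S_opp x : S x -> S (- x).
Proof. by move=> Hx; rewrite -mulN1r -mpolyC1 -mpolyCN; apply: S_mul (S_C _) Hx. Qed.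
Lemma S_sum (I : Type) (r : seq I) (P : pred I) (G : I -> R) :
  (forall i, P i -> S (G i)) -> S (\sum_(i <- r | P i) G i).
Proof. move=> H; apply: big_ind => //; [exact: S_0|exact: S_add]. Qed.
Lemma S_gen i j : (1 <= i <= N)%N -> (i < j)%N -> S (F i j).
Proof. by move=> H1 H2; apply: gen_elem; exists i, j. Qed.

Lemma W_facts : size (Wr lam) = Wdeg.+1 /\ ('C(N, 2) <= Sd)%N.
Proof. exact: Wr_size (d_inj Hlam). Qed.

Lemma W_neq0 : Wr lam != 0.
Proof. by rewrite -size_poly_eq0 (proj1 W_facts). Qed.

Definition Qp (M : nat) (i : nat) : {poly R} := \poly_(b < M) F i (M - b)%N.

Lemma F_vanish i j' : (1 <= i <= N)%N -> (1 <= j' < i)%N -> F i j' = 0.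
Proof.
move=> Hi Hj; have [HW HS] := W_facts.
pose M := (Wdeg.+1 + i)%N.
have HQ := Q_lemma (HF Hi) (_ : (size (Wr lam) <= M)%N).
rewrite HW /= in HQ; have {}HQ := HQ (leq_addr _ _).
have Hc := size_numF HS Hi.
have HWQ : (size (Wr lam * Qp M i)%R <= (size (Wr lam)).-1 + (M + 1 - i))%N.
  rewrite HW /= -[Wr lam * Qp M i](subrK ('X^M * numF lam i)).
  apply: leq_trans (size_polyD _ _) _; rewrite geq_max; apply/andP; split.
    by apply: leq_trans HQ _; apply: leq_addr.
  have [->|c0] := eqVneq (numF lam i) 0; first by rewrite mulr0 size_poly0.
  have Hc0 : (0 < size (numF lam i))%N by rewrite size_poly_gt0.
  apply: leq_trans (size_polyMleq _ _) _; rewrite size_polyXn /M; move: Hc Hc0; move: (size (numF lam i)) => sc; lia.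
have HQs := cancel_size W_neq0 HWQ.
have := leq_sizeP _ _ HQs (M - j')%N; rewrite coef_poly ifT; last by lia.
have -> : (M - (M - j') = j')%N by lia.
by apply; lia.
Qed.

Definition Lop (M : nat) (p : {poly R}) : {poly R} :=
  'X^M * p^`(N) + \sum_(1 <= i < N.+1) Qp M i * p^`(N - i).

Lemma Lop_add M p q : Lop M (p + q) = Lop M p + Lop M q.
Proof.
rewrite /Lop derivnD mulrDr addrACA; congr (_ + _).
by rewrite -big_split /=; apply: eq_bigr => i _; rewrite derivnD mulrDr.
Qed.

Lemma Lop_scale M a p : Lop M (a *: p) = a *: Lop M p.
Proof.
rewrite /Lop derivnZ scalerDr scalerAr; congr (_ + _).
by rewrite scaler_sumr; apply: eq_bigr => i _; rewrite derivnZ scalerAr.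
Qed.

Lemma Lop0 M : Lop M 0 = 0.
Proof. by have := Lop_scale M 0 0; rewrite !scale0r. Qed.

Lemma Lop_lin M n (a : nat -> R) (p : nat -> {poly R}) :
  Lop M (\sum_(e < n) a e *: p e) = \sum_(e < n) a e *: Lop M (p e).
Proof.
elim: n => [|n IH]; first by rewrite !big_ord0 Lop0.
by rewrite !big_ord_recr /= Lop_add IH Lop_scale.
Qed.

Lemma coef_q_dXn (q : {poly R}) e m K :
  (q * ('X^e)^`(m))`_K = (e ^_ m)%:R * (if (e - m <= K)%N then q`_(K - (e - m)) else 0).
Proof.
rewrite derivnXn mulrnAr coefMn coefMXn; case: (ltnP K (e - m)) => H.
  by rewrite mul0rn mulr0.
by rewrite mulr_natl.
Qed.

Lemma f_expand t : f t = \sum_(e < (d t).+1) (f t)`_e *: 'X^e.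
Proof.
rewrite -poly_def; apply/polyP => k; rewrite coef_poly; case: ltnP => // H.
by rewrite nth_default //; apply: leq_trans (size_fpoly t) H.
Qed.

Lemma WL t M : Wr lam * Lop M (f t) =
  \sum_(1 <= i < N.+1) (Wr lam * Qp M i - 'X^M * numF lam i) * (f t)^`(N - i).
Proof.
have E : Wr lam * (f t)^`(N) = - \sum_(1 <= i < N.+1) numF lam i * (f t)^`(N - i).
  by apply/eqP; rewrite -addr_eq0 main_rel.
rewrite /Lop mulrDr mulrA (mulrC (Wr lam)) -mulrA E mulrN !big_distrr -sumrN -big_split /=.
by apply: eq_bigr => i _; rewrite mulrBl !mulrA addrC.
Qed.

Lemma size_Lf t M : (size (Wr lam) <= M)%N -> (size (Lop M (f t)) <= d t)%N.
Proof.
move=> HM; apply: (cancel_size W_neq0); rewrite WL big_nat_cond.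
apply: size_sum_leq => i /andP[/andP[H1 H2] _].
have HQ := Q_lemma (HF (_ : (1 <= i <= N)%N)) HM.
apply: leq_trans (size_polyMleq _ _) _.
have := size_derivn_f t (N - i); have := HQ ltac:(lia).
rewrite /Qp; move: (size (Wr lam * _ - _)%R) (size (f t)^`(N - i)) (size (Wr lam)) => a b w.
lia.
Qed.
Definition Mj (j : nat) := (size (Wr lam) + N + j)%N.
Definition Kj (t : 'I_N) (j : nat) := (Mj j + d t - N - j)%N.
Definition beta (t : 'I_N) (j e : nat) : R := (Lop (Mj j) 'X^e)`_(Kj t j).

Lemma expansion t j : (j <= d t)%N ->
  \sum_(e < (d t).+1) (f t)`_e * beta t j e = 0.
Proof.
move=> Hj.
have L0 : (Lop (Mj j) (f t))`_(Kj t j) = 0.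
  apply: (leq_sizeP _ _ (size_Lf t (_ : (size (Wr lam) <= Mj j)%N))); rewrite /Kj /Mj; lia.
rewrite {1}f_expand Lop_lin coef_sum in L0.
by etransitivity; last exact: L0; apply: eq_bigr => e _; rewrite coefZ.
Qed.

Definition Ind (m : nat) : R := (m ^_ N)%:R + \sum_(1 <= i < N.+1) (m ^_ (N - i))%:R * F i i.

Lemma beta_e0 t j : (j <= d t)%N -> beta t j (d t - j) = Ind (d t - j).
Proof.
move=> Hj; rewrite /beta /Lop /Ind coefD coef_sum coef_q_dXn; congr (_ + _).
  case: (leqP N (d t - j)) => H.
    rewrite ifT; last by rewrite /Kj /Mj; lia.
    rewrite coefXn (_ : (_ == _) = true) ?mulr1 //; apply/eqP; rewrite /Kj /Mj; lia.
  by rewrite ffact_small // !mul0r.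
rewrite big_nat_cond [RHS]big_nat_cond; apply: eq_bigr => i /andP[/andP[H1 H2] _].
rewrite coef_q_dXn; case: (leqP (N - i) (d t - j)) => H.
  rewrite ifT; last by rewrite /Kj /Mj; lia.
  rewrite /Qp coef_poly ifT; last by rewrite /Kj /Mj; lia.
  congr (_ * F i _); rewrite /Kj /Mj; lia.
by rewrite ffact_small // !mul0r.
Qed.

Lemma beta_low t j e : (j <= d t)%N -> (e < d t - j)%N -> beta t j e = 0.
Proof.
move=> Hj He; rewrite /beta /Lop coefD coef_sum coef_q_dXn.
rewrite big_nat_cond big1 ?addr0; last first.
  move=> i /andP[/andP[H1 H2] _]; rewrite coef_q_dXn.
  case: (leqP (N - i) e) => H; last by rewrite ffact_small // !mul0r.
  case: ifP => Hc; last by rewrite mulr0.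
  rewrite /Qp coef_poly; case: ifP => Hb; last by rewrite mulr0.
  rewrite F_vanish ?mulr0 //; move: Hc Hb; rewrite /Kj /Mj; lia.
case: (leqP N e) => H; last by rewrite ffact_small // !mul0r.
case: ifP => Hc; last by rewrite mulr0.
rewrite coefXn (_ : (_ == _) = false) ?mulr0 //; apply/negbTE/eqP; move: Hc; rewrite /Kj /Mj; lia.
Qed.

Lemma beta_high t j e : (j <= d t)%N -> (d t - j < e)%N -> (e <= d t)%N -> S (beta t j e).
Proof.
move=> Hj He Hed; rewrite /beta /Lop coefD coef_sum coef_q_dXn.
apply: S_add.
  apply: S_mul; first exact: S_nat.
  by case: ifP => _; rewrite ?coefXn; [exact: S_nat|exact: S_0].
rewrite big_nat_cond; apply: S_sum => i /andP[/andP[H1 H2] _]; rewrite coef_q_dXn.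
case: (leqP (N - i) e) => H; last by rewrite ffact_small // !mul0r; exact: S_0.
case: ifP => Hc; last by rewrite mulr0; exact: S_0.
rewrite /Qp coef_poly; case: ifP => Hb; last by rewrite mulr0; exact: S_0.
apply: S_mul; first exact: S_nat.
apply: S_gen; first lia.
move: Hc Hb; rewrite /Kj /Mj; lia.
Qed.

Lemma Ind_root t : Ind (d t) = 0.
Proof.
have := @expansion t 0 (leq0n _).
rewrite (bigD1 (Ordinal (ltnSn (d t)))) //= big1 ?addr0.
  by rewrite fpoly_top mul1r -{1}(subn0 (d t)) beta_e0 // subn0.
move=> e He; rewrite beta_low ?mulr0 //.
have : nat_of_ord e != d t by apply: contraNneq He => E; apply/eqP; apply: val_inj.
have := ltn_ord e; move: (nat_of_ord e) => k; lia.
Qed.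
Definition IndP : {poly R} := ffpoly R N + \sum_(1 <= i < N.+1) (F i i)%:P * ffpoly R (N - i).

Lemma IndP_eval m : IndP.[m%:R] = Ind m.
Proof. have H := @IndP_eval_gen R N (fun i => F i i) m; rewrite /IndP /Ind; exact: H. Qed.

Definition rs : seq R := [seq (d t)%:R | t <- enum 'I_N].

Lemma IndP_prod : IndP = \prod_(z <- rs) ('X - z%:P).
Proof.
apply: (@IndP_prod_gen R N (fun i => F i i) rs).
- by rewrite /rs size_map size_enum_ord.
- apply/allP => z /mapP[t _ ->]; rewrite /root; apply/eqP.
  exact: (etrans (IndP_eval _) (Ind_root t)).
- rewrite /rs map_inj_uniq ?enum_uniq // => a b E.
  apply: (d_inj Hlam); case: (eqVneq (d a) (d b)) => // H.
  by move: (natr_neq H); rewrite E eqxx.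
Qed.

Lemma Ind_const m : ~~ inP lam m -> exists k : Cplx, k != 0 /\ Ind m = k%:MP.
Proof.
move=> Hm.
exists (\prod_(t <- enum 'I_N) (m%:R - (d t)%:R)); split.
  rewrite prodf_seq_neq0; apply/allP => t _ /=; rewrite subr_eq0 Num.Theory.eqr_nat.
  by apply: contra Hm => /eqP E; apply/existsP; exists t; rewrite E.
rewrite -IndP_eval IndP_prod /rs prod_eval_gen rmorph_prod.
by apply: eq_bigr => t _; rewrite rmorphB /= !mpolyC_nat.
Qed.
Lemma coef_S t : forall j, (j <= d t)%N -> forall e, (d t - j <= e)%N -> S ((f t)`_e).
Proof.
elim => [|j IH] Hj e He.
  case: (eqVneq e (d t)) => [->|Hne]; first by rewrite fpoly_top; exact: S_1.
  rewrite nth_default; first exact: S_0.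
  apply: leq_trans (size_fpoly t) _; lia.
case: (leqP (d t - j) e) => He'; first by apply: IH => //; lia.
have -> : e = (d t - j.+1)%N by lia.
case: (boolP (inP lam (d t - j.+1))) => Hin.
  rewrite coef_fpoly (_ : (_ == d t) = false) ?add0r; last by apply/negbTE/eqP; lia.
  rewrite big1; first exact: S_0.
  move=> x /eqP Hx; rewrite (_ : (_ == _) = false) ?mulr0 //; apply/negbTE/eqP => E.
  case: x Hx E => [[r k] Hv] /= Hr E; subst r; have /andP[_ Hk] := Hv.
  by move: Hk; rewrite /= -E Hin.
have [k [k0 Hk]] := Ind_const Hin.
have Hexp := @expansion t j.+1 Hj.
have Hlt : (d t - j.+1 < (d t).+1)%N by lia.
rewrite (bigD1 (Ordinal Hlt)) //= beta_e0 // Hk in Hexp.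
have Hprod : S ((f t)`_(d t - j.+1) * k%:MP).
  move/eqP: Hexp; rewrite addr_eq0 => /eqP ->; apply: S_opp; apply: S_sum => e2 He2.
  have He3 : nat_of_ord e2 != (d t - j.+1)%N.
    by apply: contraNneq He2 => E; apply/eqP; apply: val_inj.
  have Hel := ltn_ord e2.
  case: (ltnP e2 (d t - j.+1)) => Hc.
    by rewrite beta_low // mulr0; exact: S_0.
  apply: S_mul.
    by apply: IH; [lia|move: He3 Hc; move: (nat_of_ord e2) => q; lia].
  by apply: beta_high => //; move: He3 Hc Hel; move: (nat_of_ord e2) => q; lia.
have -> : (f t)`_(d t - j.+1) = k^-1%:MP * ((f t)`_(d t - j.+1) * k%:MP).
  by rewrite mulrCA -rmorphM mulVf // rmorph1 mulr1.
by apply: S_mul; first exact: S_C.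
Qed.

Lemma fvar_S (x : Idx lam) : S (fvar x).
Proof.
case: x => [[t j] Hv]; have /andP[Hj0 Hnot] := Hv.
have Hjd := ltn_ord j.
pose x0 : Idx lam := exist _ (existT _ t j) Hv.
have E : (f t)`_(d t - j) = fvar x0.
  rewrite coef_fpoly (_ : (_ == d t) = false) ?add0r; last first.
    by apply/negbTE/eqP; move: Hj0 Hjd; move: (nat_of_ord j) => q /=; lia.
  rewrite (bigD1 x0) //= eqxx mulr1 big1 ?addr0 // => x /andP[/eqP Hx Hne].
  rewrite (_ : (_ == _) = false) ?mulr0 //; apply/negbTE.
  apply: contra Hne; case: x Hx => [[r k] Hv'] /= Hr; subst r => /eqP E.
  apply/eqP; apply: val_inj => /=.
  have Hkd := ltn_ord k.
  have Ekj : nat_of_ord k = nat_of_ord j by lia.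
  by rewrite (val_inj Ekj).
rewrite -E; apply: (@coef_S t j); [exact: Hjd|exact: leqnn].
Qed.

Lemma all_S (p : R) : S p.
Proof.
elim/mpolyind: p => [|c m p _ _ IH]; first exact: S_0.
apply: S_add => //; rewrite -mul_mpolyC; apply: S_mul; first exact: S_C.
rewrite mpolyXE_id; apply: big_ind; [exact: S_1|exact: S_mul|].
move=> i _; elim: (m i) => [|n IHn]; first by rewrite expr0; exact: S_1.
rewrite exprS; apply: S_mul => //.
by have := fvar_S (enum_val i); rewrite /fvar enum_valK.
Qed.

End Main.

Unset Implicit Arguments.
Set Strict Implicit.

Theorem lemma3p4 (N : nat) (lam : 'I_N -> nat) (Hlam : is_partition lam)
  (F : nat -> nat -> Olam lam)
  (HF : forall i : nat, (1 <= i <= N)%N ->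
          laurent_expansion (numF lam i) (Wr lam) (F i)) :
  forall p : Olam lam,
    in_gen_subalg
      (fun q => exists i j : nat, [/\ (1 <= i <= N)%N, (i < j)%N & q = F i j]) p.
Proof. by move=> p; apply: (all_S Hlam HF). Qed.
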